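(* Let $\alpha\ge1$ and $2\le m\le k<n$. Suppose a single-pass streaming algorithm $\mathcal{A}$ with memory $m$ satisfies condition (SR). Then for every $i\in[k]$ and all sufficiently large $T$, $$\mathbb{E}_{\nu_i}[L_1]\le\frac18 f(k,m)\,T^{\frac{1}{\alpha+1}}.$$
   Context: Streaming stochastic multi-armed bandit: $n$ arms arrive one by one in a stream; arm $i$ has Bernoulli rewards with mean $\mu_i$. At most $m$ arms can be stored in memory; in each of $T$ rounds the player may discard stored arms and read next arms from the stream, then pulls exactly one stored arm $A_t$; discarded or passed-over arms cannot be pulled again. Regret $\mathbb{E}_\nu[R(T)]=\mathbb{E}_\nu[\sum_{t=1}^T(\mu_*-\mu_{A_t})]$ with $\mu_*$ the largest mean of $\nu$. Hard instances: $\varepsilon=\frac14\left(\frac{k}{T}\right)^{\frac{1}{2+2\alpha}}$, arms arriving in order $1,\dots,n$. $\nu_1$: arm 1 mean $\frac12+n\varepsilon$, arms $2,\dots,k$ mean $\frac12+(n-1)\varepsilon$, arms $k+1,\dots,n$ mean $\frac12$. For $2\le i\le k$, $\nu_i$ equals $\nu_1$ except arm $i$ has mean $\frac12+(n+1)\varepsilon$. $\mathcal{I}=\{\nu_1,\dots,\nu_k\}$. $\nu_i'$ equals $\nu_i$ except arms $k+1,\dots,n$ have mean $1$; $\mathcal{I}'=\{\nu_1',\dots,\nu_k'\}$. $f(k,m)=\frac{2}{16^{\alpha+1}}\cdot\frac{k-m+1}{k^{\frac{1}{\alpha+1}}}$. Condition (SR): for every $\nu\in\mathcal{I}$, $\mathbb{E}_\nu[R(T)]\le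 f(k,m)T^{\frac{1}{\alpha+1}}\varepsilon^{1-2\alpha}$, and for every $\nu'\in\mathcal{I}'$, $\mathbb{E}_{\nu'}[R(T)]\le\frac1{32}f(k,m)T^{\frac{1}{\alpha+1}}$. $L_1$ is the (random) number of rounds before the $(k+1)$-th arm of the stream is read (''stage one''). *)

(* Defs.v *)
From Stdlib Require Import Reals List Arith Lia Lra.
Import ListNotations.
Open Scope R_scope.

(** Arms are numbered 1..n in stream order.  A round's action is
    (p', M', a): after the round's reading/discarding the stream pointer is
    p' (arms 1..p' have been read or passed over), the memory is the list of
    arm indices M', and the arm pulled is a. *)
Definition action : Type := (nat * list nat * nat)%type.
Definition ptr (a : action) : nat := fst (fst a).
Definition mem (a : action) : list nat := snd (fst a).
Definition arm (a : action) : nat := snd a.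

(** A history: the actions taken so far together with the observed
    (Bernoulli) rewards, oldest first. *)
Definition history : Type := list (action * bool).

Definition state (h : history) : nat * list nat :=
  fold_left (fun _ e => (ptr (fst e), mem (fst e))) h (0%nat, []).

(** Legal action from state (p, M) with n arms and memory m: the pointer
    only moves forward (single pass), the new memory consists of previously
    stored arms and newly read arms, has at most m distinct arms, and the
    pulled arm is stored. *)
Definition valid_action (n m : nat) (s : nat * list nat) (a : action) : Prop :=
  let (p, M) := s in
  (p <= ptr a <= n)%nat /\ NoDup (mem a) /\ (length (mem a) <= m)%nat /\
  (forall x, In x (mem a) -> In x M \/ (p < x <= ptr a)%nat) /\
  In (arm a) (mem a).

Definition valid_hist (n m : nat) (h : history) : Prop :=
  forall h1 e h2, h = h1 ++ e :: h2 -> valid_action n m (state h1) (fst e).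

(** A (possibly randomized) algorithm: maps a history to a finite
    probability distribution over legal actions. *)
Definition policy : Type := history -> list (R * action).

Definition is_policy (n m : nat) (pol : policy) : Prop :=
  forall h, valid_hist n m h ->
    Forall (fun wa => 0 <= fst wa /\ valid_action n m (state h) (snd wa)) (pol h) /\
    fold_right Rplus 0 (map fst (pol h)) = 1.

Fixpoint expect (pol : policy) (mu : nat -> R) (t : nat) (h : history)
    (g : history -> R) : R :=
  match t with
  | O => g h
  | S t' =>
      fold_right Rplus 0
        (map (fun wa =>
           fst wa *
           (mu (arm (snd wa)) * expect pol mu t' (h ++ [(snd wa, true)]) g +
            (1 - mu (arm (snd wa))) * expect pol mu t' (h ++ [(snd wa, false)]) g))
         (pol h))
  end.

Definition mustar (n : nat) (mu : nat -> R) : R :=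
  fold_right Rmax (mu 1%nat) (map mu (seq 1 n)).

Definition regret (n : nat) (mu : nat -> R) (h : history) : R :=
  fold_right Rplus 0 (map (fun e => mustar n mu - mu (arm (fst e))) h).

Definition exp_regret (pol : policy) (n : nat) (mu : nat -> R) (T : nat) : R :=
  expect pol mu T [] (regret n mu).

(** L_1: number of rounds before the (k+1)-th arm is read, i.e. rounds
    whose pointer (after that round's reading) is still <= k. *)
Definition L1 (k : nat) (h : history) : R :=
  INR (length (filter (fun e => Nat.leb (ptr (fst e)) k) h)).

Definition eps (alpha : R) (k T : nat) : R :=
  / 4 * Rpower (INR k / INR T) (1 / (2 + 2 * alpha)).

Definition nu (k n : nat) (e : R) (i j : nat) : R :=
  if Nat.eqb j 1 then / 2 + INR n * e
  else if Nat.leb j k then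
    (if Nat.eqb j i then / 2 + (INR n + 1) * e else / 2 + (INR n - 1) * e)
  else / 2.

Definition nu' (k n : nat) (e : R) (i j : nat) : R :=
  if Nat.ltb k j then 1 else nu k n e i j.

Definition fkm (alpha : R) (k m : nat) : R :=
  2 / Rpower 16 (alpha + 1) * (INR k - INR m + 1) / Rpower (INR k) (1 / (alpha + 1)).

Definition SR (alpha : R) (m k n T : nat) (pol : policy) : Prop :=
  (forall i, (1 <= i <= k)%nat ->
     exp_regret pol n (nu k n (eps alpha k T) i) T <=
       fkm alpha k m * Rpower (INR T) (1 / (alpha + 1)) *
       Rpower (eps alpha k T) (1 - 2 * alpha)) /\
  (forall i, (1 <= i <= k)%nat ->
     exp_regret pol n (nu' k n (eps alpha k T) i) T <=
       / 32 * fkm alpha k m * Rpower (INR T) (1 / (alpha + 1))).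

(* Main.v *)
Require Import Defs.
From Stdlib Require Import Reals List Arith Lia Lra.
Import ListNotations.
Open Scope R_scope.

Definition sumR (l : list R) : R := fold_right Rplus 0 l.

Lemma fold_Rplus_init (a : R) l : fold_right Rplus a l = a + fold_right Rplus 0 l.
Proof. induction l; simpl; [ring | rewrite IHl; ring]. Qed.

Lemma sum_map_le {A} (P : A -> Prop) (f g : A -> R) l :
  Forall P l -> (forall x, P x -> f x <= g x) ->
  fold_right Rplus 0 (map f l) <= fold_right Rplus 0 (map g l).
Proof.
  induction 1 as [|x l Px Fl IHl]; intros Hfg; simpl; [lra|].
  apply Rplus_le_compat; auto.
Qed.

Lemma sum_scale {A} (c : R) (F : A -> R) l :
  fold_right Rplus 0 (map (fun x => c * F x) l) = c * fold_right Rplus 0 (map F l).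
Proof. induction l; simpl; [ring | rewrite IHl; ring]. Qed.

Lemma sum_mul_r {A} (c : R) (F : A -> R) l :
  fold_right Rplus 0 (map (fun x => F x * c) l) = fold_right Rplus 0 (map F l) * c.
Proof. induction l; simpl; [ring | rewrite IHl; ring]. Qed.

Lemma state_snoc h e : state (h ++ [e]) = (ptr (fst e), mem (fst e)).
Proof. unfold state; rewrite fold_left_app; reflexivity. Qed.

Lemma valid_snoc n m h a b :
  valid_hist n m h -> valid_action n m (state h) a -> valid_hist n m (h ++ [(a,b)]).
Proof.
  intros Hv Ha h1 e h2 Heq.
  destruct h2 as [|x h2'] using rev_ind.
  - apply app_inj_tail in Heq. destruct Heq as [E1 E2]. subst. exact Ha.
  - rewrite app_comm_cons, app_assoc in Heq.
    apply app_inj_tail in Heq. destruct Heq as [Heq _].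
    eapply Hv. exact Heq.
Qed.

Lemma valid_prefix n m h e :
  valid_hist n m (h ++ [e]) -> valid_hist n m h /\ valid_action n m (state h) (fst e).
Proof.
  intros Hv. split.
  - intros h1 e' h2 Heq. apply (Hv h1 e' (h2 ++ [e])).
    rewrite Heq, <- app_assoc. reflexivity.
  - apply (Hv h e []). reflexivity.
Qed.

Lemma va_facts n m s a : valid_action n m s a ->
  (fst s <= ptr a)%nat /\
  (forall x, In x (mem a) -> In x (snd s) \/ (fst s < x <= ptr a)%nat) /\
  In (arm a) (mem a).
Proof. destruct s as [p M]; unfold valid_action; simpl; tauto. Qed.

Lemma mem_bound n m h : valid_hist n m h ->
  forall x, In x (snd (state h)) -> (x <= fst (state h))%nat.
Proof.
  induction h as [|e h IH] using rev_ind.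
  - simpl. tauto.
  - intros Hv x Hx. destruct (valid_prefix _ _ _ _ Hv) as [Hv' Ha].
    rewrite state_snoc in *. simpl in *.
    destruct (va_facts _ _ _ _ Ha) as [H1 [H2 _]].
    destruct (H2 x Hx) as [Hin|Hr]; [|lia].
    specialize (IH Hv' x Hin). lia.
Qed.

Lemma arm_le_ptr n m h a : valid_hist n m h -> valid_action n m (state h) a ->
  (arm a <= ptr a)%nat.
Proof.
  intros Hv Ha. destruct (va_facts _ _ _ _ Ha) as [H1 [H2 H3]].
  destruct (H2 _ H3) as [Hin|Hr]; [|lia].
  pose proof (mem_bound _ _ _ Hv _ Hin). lia.
Qed.

Lemma L1_snoc k h e : L1 k (h ++ [e]) =
  L1 k h + (if Nat.leb (ptr (fst e)) k then 1 else 0).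
Proof.
  unfold L1. rewrite filter_app, length_app, plus_INR.
  simpl. destruct (Nat.leb (ptr (fst e)) k); simpl; ring.
Qed.

Lemma regret_snoc n mu h e : regret n mu (h ++ [e]) =
  regret n mu h + (mustar n mu - mu (arm (fst e))).
Proof.
  unfold regret. rewrite map_app, fold_right_app. simpl.
  rewrite fold_Rplus_init. ring.
Qed.

Lemma expect_mono pol mu n m : is_policy n m pol -> (forall j, 0 <= mu j <= 1) ->
  forall t h g1 g2, valid_hist n m h ->
  (forall h', valid_hist n m h' -> g1 h' <= g2 h') ->
  expect pol mu t h g1 <= expect pol mu t h g2.
Proof.
  intros Hp Hmu t. induction t as [|t IH]; intros h g1 g2 Hv Hg; simpl; auto.
  destruct (Hp h Hv) as [Hf _].
  apply (sum_map_le _ _ _ _ Hf). intros wa [Hw Ha].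
  apply Rmult_le_compat_l; auto.
  pose proof (Hmu (arm (snd wa))).
  apply Rplus_le_compat; apply Rmult_le_compat_l; try lra;
  apply IH; auto; apply valid_snoc; auto.
Qed.

Lemma expect_scale pol mu t : forall h c g,
  expect pol mu t h (fun x => c * g x) = c * expect pol mu t h g.
Proof.
  induction t as [|t IH]; intros h c g; simpl; auto.
  rewrite <- sum_scale. f_equal. apply map_ext. intros wa.
  rewrite !IH. ring.
Qed.

Lemma expect_const_L1 pol mu n m k : is_policy n m pol ->
  forall t h, valid_hist n m h -> (k < fst (state h))%nat ->
  expect pol mu t h (L1 k) = L1 k h.
Proof.
  intros Hp t. induction t as [|t IH]; intros h Hv Hk; simpl; auto.
  destruct (Hp h Hv) as [Hf Hs].
  transitivity (fold_right Rplus 0 (map (fun wa => fst wa * L1 k h) (pol h))).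
  - f_equal. apply map_ext_in. intros wa Hin.
    rewrite Forall_forall in Hf. destruct (Hf wa Hin) as [_ Ha].
    destruct (va_facts _ _ _ _ Ha) as [H1 _].
    assert (Hb : forall b, expect pol mu t (h ++ [(snd wa, b)]) (L1 k) = L1 k h).
    { intros b. rewrite IH.
      - rewrite L1_snoc. simpl. replace (Nat.leb (ptr (snd wa)) k) with false.
        ring. symmetry. apply Nat.leb_gt. lia.
      - apply valid_snoc; auto.
      - rewrite state_snoc. simpl. lia. }
    rewrite !Hb. ring.
  - rewrite sum_mul_r, Hs. ring.
Qed.

Lemma expect_couple pol n m k mu1 mu2 : is_policy n m pol ->
  (forall j, (j <= k)%nat -> mu1 j = mu2 j) ->
  forall t h, valid_hist n m h ->
  expect pol mu1 t h (L1 k) = expect pol mu2 t h (L1 k).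
Proof.
  intros Hp Hmu t. induction t as [|t IH]; intros h Hv; simpl; auto.
  destruct (Hp h Hv) as [Hf _].
  f_equal. apply map_ext_in. intros wa Hin.
  rewrite Forall_forall in Hf. destruct (Hf wa Hin) as [_ Ha].
  pose proof (arm_le_ptr _ _ _ _ Hv Ha) as Hap.
  destruct (le_lt_dec (arm (snd wa)) k) as [Hle|Hlt].
  - rewrite Hmu by auto. rewrite !IH by (apply valid_snoc; auto). reflexivity.
  - assert (Hs : forall b, (k < fst (state (h ++ [(snd wa, b)])))%nat).
    { intros b. rewrite state_snoc. simpl. lia. }
    rewrite !(expect_const_L1 pol _ n m k Hp) by (auto; apply valid_snoc; auto).
    rewrite !L1_snoc. simpl. ring.
Qed.

Lemma le_fold_Rmax x d l : In x l -> x <= fold_right Rmax d l.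
Proof.
  induction l; simpl; [tauto|]. intros [->|H].
  - apply Rmax_l.
  - eapply Rle_trans; [apply IHl; auto | apply Rmax_r].
Qed.

Lemma regret_lb n m k mu :
  1 <= mustar n mu -> (forall j, mu j <= 1) -> (forall j, (j <= k)%nat -> mu j <= 3/4) ->
  forall h, valid_hist n m h -> / 4 * L1 k h <= regret n mu h.
Proof.
  intros Hs H1 H34 h. induction h as [|e h IH] using rev_ind.
  - intros _. unfold L1, regret; simpl. lra.
  - intros Hv. destruct (valid_prefix _ _ _ _ Hv) as [Hv' Ha].
    rewrite L1_snoc, regret_snoc. specialize (IH Hv').
    pose proof (arm_le_ptr _ _ _ _ Hv' Ha).
    destruct (Nat.leb (ptr (fst e)) k) eqn:E.
    + apply Nat.leb_le in E.
      assert (mu (arm (fst e)) <= 3/4) by (apply H34; lia). lra.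
    + pose proof (H1 (arm (fst e))). lra.
Qed.

Theorem lemma4p5 (alpha : R) (m k n : nat) :
  1 <= alpha -> (2 <= m)%nat -> (m <= k)%nat -> (k < n)%nat ->
  exists T0 : nat, forall T : nat, (T0 <= T)%nat ->
    forall pol : policy, is_policy n m pol -> SR alpha m k n T pol ->
    forall i : nat, (1 <= i <= k)%nat ->
      expect pol (nu k n (eps alpha k T) i) T nil (L1 k) <=
        / 8 * fkm alpha k m * Rpower (INR T) (1 / (alpha + 1)).
Proof.
  intros Ha Hm Hmk Hkn.
  assert (Hk : 2 <= INR k) by (replace 2 with (INR 2) by (simpl; ring); apply le_INR; lia).
  assert (Hn : INR k + 1 <= INR n) by (rewrite <- S_INR; apply le_INR; lia).
  set (c := / (INR n + 1)).
  assert (Hc : 0 < c) by (unfold c; apply Rinv_0_lt_compat; lra).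
  set (d := Rpower c (2 + 2 * alpha)).
  assert (Hd : 0 < d) by (unfold d, Rpower; apply exp_pos).
  destruct (INR_unbounded (INR k / d)) as [N HN].
  exists (Nat.max N 1). intros T HT pol Hp HSR i Hi.
  assert (HTN : INR N <= INR T) by (apply le_INR; lia).
  assert (HT1 : 1 <= INR T) by (replace 1 with (INR 1) by reflexivity; apply le_INR; lia).
  set (e := eps alpha k T).
  assert (He0 : 0 < e) by (unfold e, eps, Rpower; pose proof (exp_pos ((1 / (2 + 2 * alpha)) * ln (INR k / INR T))); lra).
  assert (Hkt : INR k / INR T < d).
  { assert (INR k < d * INR T).
    { assert (INR k / d * d = INR k) by (field; lra).
      nra. }
    apply (Rmult_lt_reg_r (INR T)); [lra|].
    replace (INR k / INR T * INR T) with (INR k) by (field; lra). lra. }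
  assert (Hkt0 : 0 < INR k / INR T) by (apply Rdiv_lt_0_compat; lra).
  assert (He1 : (INR n + 1) * e <= / 4).
  { assert (Rpower (INR k / INR T) (1 / (2 + 2 * alpha)) < c).
    { replace c with (Rpower d (1 / (2 + 2 * alpha))).
      - unfold Rpower at 1 2. apply exp_increasing.
        apply Rmult_lt_compat_l.
        + apply Rdiv_lt_0_compat; lra.
        + apply ln_increasing; auto.
      - unfold d. rewrite Rpower_mult.
        replace ((2 + 2 * alpha) * (1 / (2 + 2 * alpha))) with 1 by (field; lra).
        apply Rpower_1; auto. }
    unfold e, eps. fold c in H.
    assert ((INR n + 1) * c = 1) by (unfold c; field; lra).
    nra. }
  set (mu' := nu' k n e i).
  assert (Hnu : forall j, (j <= k)%nat -> / 2 <= nu k n e i j <= 3 / 4).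
  { intros j Hj. unfold nu.
    destruct (Nat.eqb j 1); [nra|].
    destruct (Nat.leb j k); [destruct (Nat.eqb j i)|]; nra. }
  assert (Hmu01 : forall j, 0 <= mu' j <= 1).
  { intros j. unfold mu', nu'. destruct (Nat.ltb k j) eqn:E; [lra|].
    apply Nat.ltb_ge in E. specialize (Hnu j E). lra. }
  assert (Hmus : 1 <= mustar n mu').
  { replace 1 with (mu' n).
    - unfold mustar. apply le_fold_Rmax. apply in_map. apply in_seq. lia.
    - unfold mu', nu'. replace (Nat.ltb k n) with true; [reflexivity|].
      symmetry. apply Nat.ltb_lt. lia. }
  assert (H34 : forall j, (j <= k)%nat -> mu' j <= 3/4).
  { intros j Hj. unfold mu', nu'. replace (Nat.ltb k j) with false.
    - apply Hnu; auto.
    - symmetry. apply Nat.ltb_ge. lia. }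
  assert (Hv0 : valid_hist n m []).
  { intros h1 e' h2 Heq. exfalso. destruct h1; discriminate. }
  assert (Heq : expect pol (nu k n e i) T [] (L1 k) = expect pol mu' T [] (L1 k)).
  { apply (expect_couple pol n m k); auto.
    intros j Hj. unfold mu', nu'. replace (Nat.ltb k j) with false; auto.
    symmetry. apply Nat.ltb_ge. lia. }
  fold e. rewrite Heq.
  assert (Hle : expect pol mu' T [] (fun h => / 4 * L1 k h) <= exp_regret pol n mu' T).
  { apply (expect_mono pol mu' n m); auto.
    intros h' Hv'. apply (regret_lb n m k); auto. intros j; apply Hmu01. }
  rewrite expect_scale in Hle.
  destruct HSR as [_ HSR2]. specialize (HSR2 i Hi). fold e in HSR2. fold mu' in HSR2.
  set (X := fkm alpha k m * Rpower (INR T) (1 / (alpha + 1))) in *.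
  replace (/ 32 * fkm alpha k m * Rpower (INR T) (1 / (alpha + 1))) with (/32 * X) in HSR2 by (unfold X; ring).
  replace (/ 8 * fkm alpha k m * Rpower (INR T) (1 / (alpha + 1))) with (/8 * X) by (unfold X; ring).
  lra.
Qed.
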